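(* Let $H$ be a regular tournament with $2m+1$ vertices and let $v\in V(H)$. Suppose there is no directed cycle with vertices $p,q,r,s$ in order ($p\to q\to r\to s\to p$) such that $p,r$ are out-neighbours of $v$ and $q,s$ are in-neighbours of $v$. Then $H$ is cyclic.
   Context: A tournament $H$ is regular if all its vertices have the same outdegree and all have the same indegree (so $|V(H)|=2m+1$ and every vertex has in- and outdegree $m$). A tournament $H$ is cyclic if it has an odd number $2m+1$ of vertices and they can be ordered $v_1,\dots,v_{2m+1}$ so that for $1\le i<j\le 2m+1$, $v_i$ is adjacent to $v_j$ (edge $v_i\to v_j$) if and only if $j-i\le m$. *)

(* Defs.v *)
From mathcomp Require Import all_boot.
Set Implicit Arguments. Unset Strict Implicit. Unset Printing Implicit Defensive.

Definition tournament (V : finType) (adj : rel V) : Prop :=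
  (forall x, ~~ adj x x) /\
  (forall x y, x != y -> adj x y (+) adj y x) .

Definition outdeg (V : finType) (adj : rel V) (v : V) := #|[set w | adj v w]|.
Definition indeg (V : finType) (adj : rel V) (v : V) := #|[set w | adj w v]|.

Definition regular_tournament (V : finType) (adj : rel V) : Prop :=
  tournament adj /\
  (forall u v, outdeg adj u = outdeg adj v) /\
  (forall u v, indeg adj u = indeg adj v).

Definition cyclic_tournament (V : finType) (adj : rel V) : Prop :=
  exists m : nat, exists f : 'I_(m.*2.+1) -> V,
    bijective f /\
    forall i j : 'I_(m.*2.+1), i < j -> (adj (f i) (f j) = (j - i <= m)).

(* Main.v *)
Require Import Defs.
From mathcomp Require Import all_boot zify.
Set Implicit Arguments. Unset Strict Implicit. Unset Printing Implicit Defensive.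

Lemma card_sum (T : finType) (S : {set T}) (P : pred T) :
  #|[set x in S | P x]| = \sum_(x in S) P x.
Proof.
rewrite -sum1_card (big_mkcond (fun x => x \in _)) [RHS]big_mkcond /=.
by apply: eq_bigr => x _; rewrite inE; case: (x \in S); case: (P x).
Qed.

Lemma card_sumT (T : finType) (P : pred T) :
  #|[set x | P x]| = \sum_x P x.
Proof.
rewrite -sum1_card (big_mkcond (fun x => x \in _)) /=.
by apply: eq_bigr => x _; rewrite inE; case: (P x).
Qed.

Lemma sum_eq0_each (T : finType) (S : {set T}) (F : T -> nat) :
  \sum_(i in S) F i = 0 -> forall i, i \in S -> F i = 0.
Proof.
move=> /eqP; rewrite sum_nat_eq0 => /forallP H i iS.
by move: (H i); rewrite iS => /eqP.
Qed.

Lemma sum_le_eq (T : finType) (S : {set T}) (F G : T -> nat) :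
  (forall i, i \in S -> F i <= G i) ->
  \sum_(i in S) G i <= \sum_(i in S) F i -> forall i, i \in S -> F i = G i.
Proof.
move=> le sG i iS.
have E : \sum_(i in S) G i = \sum_(i in S) F i + \sum_(i in S) (G i - F i).
  by rewrite -big_split /=; apply: eq_bigr => j jS; rewrite subnKC // le.
have : \sum_(i in S) (G i - F i) = 0 by lia.
move/sum_eq0_each => /(_ i iS) H; have := le i iS; lia.
Qed.

Lemma sum_filter (T : finType) (S : {set T}) (P : pred T) (F : T -> nat) :
  \sum_(x in [set x in S | P x]) F x = \sum_(x in S) P x * F x.
Proof.
rewrite (big_mkcond (fun x => x \in _)) [RHS]big_mkcond /=.
by apply: eq_bigr => x _; rewrite inE; case: (x \in S); case: (P x) => //=; rewrite mul1n.
Qed.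

Lemma sum_filter_le (T : finType) (S : {set T}) (P : pred T) (F : T -> nat) :
  \sum_(x in [set x in S | P x]) F x <= \sum_(x in S) F x.
Proof.
rewrite sum_filter; apply: leq_sum => x _; case: (P x); rewrite ?mul1n ?mul0n //.
Qed.

Lemma sum_split (T : finType) (S : {set T}) (P : pred T) :
  \sum_(x in S) P x + \sum_(x in S) (~~ P x) = #|S|.
Proof.
rewrite -big_split -sum1_card /=; apply: eq_bigr => x _; by case: (P x).
Qed.

Section Tour.
Variable V : finType.
Variable adj : rel V.
Hypothesis irr : forall x, ~~ adj x x.
Hypothesis xr : forall x y, x != y -> adj x y (+) adj y x.

Lemma asym x y : adj x y -> ~~ adj y x.
Proof.
case: (eqVneq x y) => [->|ne]; first by rewrite (negbTE (irr y)).
by move: (xr ne); case: (adj x y); case: (adj y x).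
Qed.

Lemma adj_neq x y : adj x y -> x != y.
Proof. by apply: contraTneq => ->; apply: irr. Qed.

Lemma io_sum x y : adj x y + adj y x = (x != y).
Proof.
case: (eqVneq x y) => [->|ne]; first by rewrite (negbTE (irr y)).
by move: (xr ne); case: (adj x y); case: (adj y x).
Qed.

Lemma sum_neq (S : {set V}) x : x \in S -> \sum_(y in S) (x != y) = #|S| - 1.
Proof.
move=> xS; rewrite -sum1_card (bigD1 x) //= [in RHS](bigD1 x) //= eqxx /=.
rewrite add0n add1n subn1 /=; apply: eq_bigr => y /andP [_ ne].
by rewrite eq_sym ne.
Qed.

Lemma inout (S : {set V}) x : x \in S ->
  \sum_(y in S) adj x y + \sum_(y in S) adj y x = #|S| - 1.
Proof.
move=> xS; rewrite -big_split /= -(sum_neq xS); apply: eq_bigr => y _; exact: io_sum.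
Qed.

Lemma inside (S : {set V}) :
  2 * \sum_(x in S) \sum_(y in S) adj x y = #|S| * (#|S| - 1).
Proof.
have E : \sum_(x in S) (\sum_(y in S) adj x y + \sum_(y in S) adj y x) = #|S| * (#|S| - 1).
  by rewrite -sum_nat_const; apply: eq_bigr => x xS; rewrite inout.
rewrite big_split /= in E.
rewrite [X in _ + X = _](exchange_big) /= in E.
lia.
Qed.

Lemma inside' (S : {set V}) :
  2 * \sum_(x in S) \sum_(y in S) adj y x = #|S| * (#|S| - 1).
Proof. by rewrite exchange_big /=; apply: inside. Qed.

End Tour.

Section Main.
Variable V : finType.
Variable adj : rel V.
Variable m : nat.
Variable v : V.
Hypothesis irr : forall x, ~~ adj x x.
Hypothesis xr : forall x y, x != y -> adj x y (+) adj y x.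
Hypothesis outm : forall x, \sum_w adj x w = m.
Hypothesis inm : forall x, \sum_w adj w x = m.
Hypothesis no4 : forall p q r s, adj p q -> adj q r -> adj r s -> adj s p ->
  adj v p -> adj v r -> adj q v -> adj s v -> False.

Local Notation A := [set w | adj v w].
Local Notation B := [set w | adj w v].

Lemma decomp (F : V -> nat) :
  \sum_w F w = F v + \sum_(w in A) F w + \sum_(w in B) F w.
Proof.
rewrite (bigD1 v) //= (bigID (fun w => adj v w)) /= -addnA; congr (_ + (_ + _)).
  apply: eq_bigl => w; rewrite inE; case E: (adj v w); last by rewrite andbF.
  by rewrite andbT eq_sym (adj_neq irr E).
apply: eq_bigl => w; rewrite inE; case: (eqVneq w v) => [->|ne] /=.
  by rewrite (negbTE (irr v)).
by move: (xr ne); case: (adj v w); case: (adj w v).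
Qed.

Lemma cardA : #|A| = m.
Proof. by rewrite card_sumT outm. Qed.
Lemma cardB : #|B| = m.
Proof. by rewrite card_sumT inm. Qed.

Definition n a := \sum_(b in B) adj a b.
Definition c b := \sum_(a in A) adj a b.

Lemma F1 a : a \in A -> n a = \sum_(a' in A) adj a' a + 1.
Proof.
move=> aA; have := outm a; rewrite decomp.
have -> : adj a v = false by apply: negbTE; apply: asym irr xr _ _ _; rewrite inE in aA.
have := inout irr xr aA; rewrite cardA.
have : 0 < #|A| by apply/card_gt0P; exists a.
rewrite cardA /n; lia.
Qed.

Lemma F2 b : b \in B -> c b + \sum_(b' in B) adj b' b = m.
Proof.
move=> bB; have := inm b; rewrite (decomp (fun w => adj w b)).
have -> : adj v b = false by apply: negbTE; apply: asym irr xr _ _ _; rewrite inE in bB.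
rewrite /c; lia.
Qed.

Definition sub a a' := forall b, b \in B -> adj a b -> adj a' b.

Lemma chain a a' : a \in A -> a' \in A -> sub a a' \/ sub a' a.
Proof.
move=> aA a'A; case: (boolP [forall b in B, adj a b ==> adj a' b]).
  by move/forall_inP => H; left => b bB ab; have := H b bB; rewrite ab.
move/forall_inP => H; right => b2 b2B a'b2; apply/negPn/negP => nab2.
apply: H => b1 b1B; apply/implyP => ab1; apply/negPn/negP => na'b1.
rewrite !inE in aA a'A b1B b2B.
have b1a' : adj b1 a'.
  have ne : a' != b1 by apply/eqP => E; subst; rewrite (negbTE (asym irr xr b1B)) in a'A.
  by move: (xr ne); rewrite (negbTE na'b1).
have b2a : adj b2 a.
  have ne : a != b2 by apply/eqP => E; subst; rewrite (negbTE (asym irr xr b2B)) in aA.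
  by move: (xr ne); rewrite (negbTE nab2).
exact: (no4 ab1 b1a' a'b2 b2a aA a'A b1B b2B).
Qed.

Lemma sub_le a a' : sub a a' -> n a <= n a'.
Proof. by move=> H; apply: leq_sum => b bB; case E: (adj a b) => //; rewrite (H b bB E). Qed.

Lemma inter a0 a : a0 \in A -> a \in A ->
  \sum_(b in [set b in B | adj a0 b]) adj a b = if n a < n a0 then n a else n a0.
Proof.
move=> a0A aA; rewrite sum_filter.
case: ltnP => lt.
  have sa : sub a a0.
    case: (chain aA a0A) => // /sub_le; lia.
  apply: eq_bigr => b bB; case E: (adj a b); last by rewrite muln0.
  by rewrite (sa b bB E).
case: (chain aA a0A) => sa.
  have eqn : n a = n a0 by have := sub_le sa; lia.
  rewrite -eqn; apply: eq_bigr => b bB; case E: (adj a b); last by rewrite muln0.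
  by rewrite (sa b bB E).
apply: eq_bigr => b bB; case E: (adj a0 b); last by rewrite mul0n.
by rewrite (sa b bB E).
Qed.

Lemma key a0 : a0 \in A ->
  let L := [set a in A | n a < n a0] in
  n a0 <= #|L| + 1 /\
  (n a0 = #|L| + 1 ->
    \sum_(a in L) \sum_(a' in A) adj a' a <= \sum_(a in L) \sum_(a' in L) adj a' a).
Proof.
move=> a0A L.
set T := [set b in B | adj a0 b].
have cT : #|T| = n a0 by rewrite card_sum.
have cL : #|L| = \sum_(a in A) (n a < n a0) by rewrite card_sum.
have LA : #|L| <= m by rewrite -cardA; apply: subset_leq_card; apply/subsetP => a; rewrite /L inE; case/andP.
have S1 : \sum_(b in T) c b = \sum_(a in A) \sum_(b in T) adj a b.
  by rewrite /c exchange_big.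
have S2 : \sum_(a in A) \sum_(b in T) adj a b = \sum_(a in L) n a + n a0 * (m - #|L|).
  rewrite (eq_bigr (fun a => (n a < n a0) * n a + (~~ (n a < n a0)) * n a0)); last first.
    by move=> a aA; rewrite inter //; case: ltnP => _; rewrite ?mul1n ?mul0n ?addn0.
  rewrite big_split /= sum_filter; congr (_ + _).
  rewrite -big_distrl /= mulnC; congr (_ * _).
  have := sum_split A (fun a => n a < n a0); rewrite cardA cL /=; lia.
have S3 : \sum_(a in L) n a = \sum_(a in L) \sum_(a' in A) adj a' a + #|L|.
  rewrite -sum1_card -big_split /=; apply: eq_bigr => a; rewrite inE => /andP [aA _].
  exact: F1.
have S4 : \sum_(b in T) c b + \sum_(b in T) \sum_(b' in B) adj b' b = n a0 * m.
  rewrite -big_split /= -cT -sum_nat_const; apply: eq_bigr => b; rewrite inE => /andP [bB _].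
  exact: F2.
have S5 : \sum_(b in T) \sum_(b' in T) adj b' b <= \sum_(b in T) \sum_(b' in B) adj b' b.
  by apply: leq_sum => b _; apply: sum_filter_le.
have S5' := inside' irr xr T; rewrite cT in S5'.
have S6 : \sum_(a in L) \sum_(a' in L) adj a' a <= \sum_(a in L) \sum_(a' in A) adj a' a.
  by apply: leq_sum => b _; apply: sum_filter_le.
have S6' := inside' irr xr L.
move: S1 S2 S3 S4 S5 S5' S6 S6'.
set x := n a0; set l := #|L|.
set D := \sum_(a in L) \sum_(a' in A) adj a' a.
set D0 := \sum_(a in L) \sum_(a' in L) adj a' a.
set E := \sum_(b in T) \sum_(b' in B) adj b' b.
set E0 := \sum_(b in T) \sum_(b' in T) adj b' b.
set CT := \sum_(b in T) c b.
set SL := \sum_(a in L) n a.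
set I := \sum_(a in A) \sum_(b in T) adj a b.
move=> S1 S2 S3 S4 S5 S5' S6 S6'.
have [k Hk] : exists k, m = l + k by exists (m - l); lia.
rewrite Hk addKn in S2; rewrite Hk in S4.
split.
  nia.
move=> Ex; rewrite Ex in S2 S4 S5'; nia.
Qed.

Lemma glob :
  (forall a, a \in A -> n a = \sum_(a' in A) (n a' < n a) + 1) /\
  (forall a a', a \in A -> a' \in A -> (n a' < n a) + (n a < n a') = (a != a')).
Proof.
have G1 : \sum_(a in A) n a = \sum_(a in A) \sum_(a' in A) adj a' a + m.
  by rewrite -cardA -sum1_card -big_split /=; apply: eq_bigr => a aA; apply: F1.
have G1' := inside' irr xr A; rewrite cardA in G1'.
have G2e : \sum_(a in A) \sum_(a' in A) (n a < n a') = \sum_(a in A) \sum_(a' in A) (n a' < n a).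
  by rewrite exchange_big.
have G2s : \sum_(a in A) \sum_(a' in A) (a != a') = m * (m - 1).
  by rewrite -cardA -sum_nat_const; apply: eq_bigr => a aA; apply: sum_neq.
have G2t : forall a a', (n a' < n a) + (n a < n a') <= (a != a').
  by move=> a a'; case: (eqVneq a a') => [->|_]; rewrite ?ltnn //; lia.
have G2 : \sum_(a in A) \sum_(a' in A) ((n a' < n a) + (n a < n a')) <= m * (m - 1).
  by rewrite -G2s; apply: leq_sum => a _; apply: leq_sum => a' _; apply: G2t.
have splitE : forall a, \sum_(a' in A) ((n a' < n a) + (n a < n a')) =
  \sum_(a' in A) (n a' < n a) + \sum_(a' in A) (n a < n a') by move=> a; rewrite big_split.
rewrite (eq_bigr _ (fun a _ => splitE a)) in G2.
rewrite big_split /= G2e in G2.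
have G3 : forall a, a \in A -> n a <= \sum_(a' in A) (n a' < n a) + 1.
  by move=> a aA; have [+ _] := key aA; rewrite card_sum.
have G4 : \sum_(a in A) (\sum_(a' in A) (n a' < n a) + 1) <= \sum_(a in A) n a.
  rewrite big_split /= sum1_card cardA G1; lia.
have H1 := sum_le_eq G3 G4.
split => //.
have G5 : \sum_(a in A) \sum_(a' in A) (a != a') <=
   \sum_(a in A) \sum_(a' in A) ((n a' < n a) + (n a < n a')).
  rewrite (eq_bigr _ (fun a _ => splitE a)).
  rewrite big_split /= G2e G2s.
  have : \sum_(a in A) (\sum_(a' in A) (n a' < n a) + 1) = \sum_(a in A) n a.
    by apply: eq_bigr => a aA; apply/esym/H1.
  rewrite big_split /= sum1_card cardA G1; lia.
have G2t' : forall a, a \in A -> 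
   \sum_(a' in A) ((n a' < n a) + (n a < n a')) <= \sum_(a' in A) (a != a').
  by move=> a _; apply: leq_sum => a' _; apply: G2t.
have H2 := sum_le_eq G2t' G5.
move=> a a' aA a'A.
apply: (@sum_le_eq _ A (fun a' => (n a' < n a) + (n a < n a')) (fun a' => a != a')) => //.
by move: (H2 a aA) => /= ->.
Qed.

Lemma R1 a : a \in A -> 0 < n a <= m.
Proof.
move=> aA; have [H1 _] := glob; apply/andP; split; first by rewrite (H1 a aA) addn1.
rewrite -cardB -sum1_card; apply: leq_sum => b _; by case: (adj a b).
Qed.

Lemma R2 a a' : a \in A -> a' \in A -> n a = n a' -> a = a'.
Proof.
move=> aA a'A E; have [_ H2] := glob; have := H2 a a' aA a'A.
rewrite E ltnn /=; by case: (eqVneq a a').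
Qed.

Lemma R3 a y : a \in A -> y \in A -> n a < n y -> adj a y.
Proof.
move=> aA yA lt.
have [H1 _] := glob.
set L := [set a in A | n a < n y].
have [_ K] := key yA.
have cL : n y = #|L| + 1 by rewrite card_sum -H1.
have K' := K cL.
have le : forall i, i \in L ->
  \sum_(a' in L) adj a' i <= \sum_(a' in A) adj a' i.
  by move=> i _; apply: sum_filter_le.
have E := sum_le_eq le K'.
have aL : a \in L by rewrite inE aA lt.
have := E a aL; rewrite sum_filter.
have -> : \sum_(a' in A) adj a' a =
  \sum_(a' in A) (n a' < n y) * adj a' a + \sum_(a' in A) (~~ (n a' < n y)) * adj a' a.
  by rewrite -big_split /=; apply: eq_bigr => a' _; case: (n a' < n y); rewrite /= ?mul1n ?mul0n ?addn0.
move=> /eqP; rewrite -{1}[\sum_(a' in A) _ * _]addn0 eqn_add2l eq_sym => /eqP Z.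
have := sum_eq0_each Z yA; rewrite ltnn /= mul1n => ya.
have ne : a != y by apply/eqP => E'; subst; rewrite ltnn in lt.
have ya' : adj y a = false by move: ya; case: (adj y a).
by move: (xr ne); rewrite ya'; case: (adj a y).
Qed.

Lemma R4 a b : a \in A -> b \in B -> adj a b = (m < c b + n a).
Proof.
move=> aA bB; have [H1 H2] := glob.
case E: (adj a b); apply/esym.
  have le : \sum_(a' in A) (~~ (n a' < n a)) <= c b.
    apply: leq_sum => a' a'A; case: ltnP => //= le.
    case: (chain aA a'A) => sa; first by rewrite (sa b bB E).
    have eq : n a' = n a by have := sub_le sa; lia.
    by rewrite (R2 a'A aA eq) E.
  have := sum_split A (fun a' => n a' < n a); rewrite cardA /= => S.
  have := H1 a aA; move: le S; lia.
have le : c b <= \sum_(a' in A) (n a < n a').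
  apply: leq_sum => a' a'A; case: ltnP => //= le; case E': (adj a' b) => //.
  rewrite leq_eqVlt in le; case/orP: le => [/eqP eq | lt].
    by rewrite (R2 a'A aA eq) E in E'.
  case: (chain aA a'A) => sa.
    by have := sub_le sa; lia.
  by rewrite (sa b bB E') in E.
have S : \sum_(a' in A) (n a' < n a) + \sum_(a' in A) (n a < n a') = m - 1.
  rewrite -big_split /= -cardA -(sum_neq aA); apply: eq_bigr => a' a'A; exact: H2.
have := H1 a aA; have := R1 aA; move: le S; lia.
Qed.

End Main.

Lemma sumT (T : finType) (F : T -> nat) : \sum_(x in [set: T]) F x = \sum_x F x.
Proof. by apply: eq_bigl => x; rewrite inE. Qed.

Lemma degs (V : finType) (adj : rel V) (m : nat) :
  regular_tournament adj -> #|V| = m.*2.+1 ->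
  (forall x, \sum_w adj x w = m) /\ (forall x, \sum_w adj w x = m).
Proof.
move=> [[irr xr] [od id]] cV.
have cT : #|[set: V]| = m.*2.+1 by rewrite cardsT.
have Eo : forall x y, \sum_w adj x w = \sum_w adj y w.
  by move=> x y; rewrite -!card_sumT; apply: od.
have Ei : forall x y, \sum_w adj w x = \sum_w adj w y.
  by move=> x y; rewrite -!card_sumT; apply: id.
have io : forall x, \sum_w adj x w + \sum_w adj w x = m.*2.
  by move=> x; have := inout irr xr (in_setT x); rewrite !sumT cT; lia.
have ins := inside irr xr [set: V].
rewrite cT sumT in ins.
have [x0 _] : exists x : V, true.
  have : 0 < #|V| by rewrite cV.
  by move/card_gt0P => [x _]; exists x.
rewrite (eq_bigr (fun _ => \sum_w adj x0 w)) in ins; last by move=> x _; rewrite sumT (Eo x x0).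
rewrite -sumT sum_nat_const cT in ins.
have H : \sum_w adj x0 w = m by nia.
split => x; first by rewrite (Eo x x0).
by have := io x0; rewrite (Ei x x0) H; lia.
Qed.

Theorem theorem3p8 (V : finType) (adj : rel V) (m : nat) (v : V) :
  regular_tournament adj ->
  #|V| = m.*2.+1 ->
  ~ (exists p q r s : V,
       [&& adj p q, adj q r, adj r s, adj s p,
           p != r, q != s,
           adj v p, adj v r, adj q v & adj s v]) ->
  cyclic_tournament adj.
Proof.
move=> reg cV no.
have [outm inm] := degs reg cV.
move: reg => [[irr xr] _].
have no4 : forall p q r s, adj p q -> adj q r -> adj r s -> adj s p ->
  adj v p -> adj v r -> adj q v -> adj s v -> False.
  move=> p q r s pq qr rs sp vp vr qv sv; apply: no; exists p, q, r, s.
  rewrite pq qr rs sp vp vr qv sv /= !andbT.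
  apply/andP; split; apply/eqP => E; subst.
    by rewrite (negbTE (asym irr xr pq)) in qr.
  by rewrite (negbTE (asym irr xr qr)) in rs.
pose adj' := fun x y => adj y x.
have irr' : forall x, ~~ adj' x x by move=> x; apply: irr.
have xr' : forall x y, x != y -> adj' x y (+) adj' y x.
  by move=> x y ne; rewrite /adj' addbC; apply: xr.
have no4' : forall p q r s, adj' p q -> adj' q r -> adj' r s -> adj' s p ->
  adj' v p -> adj' v r -> adj' q v -> adj' s v -> False.
  rewrite /adj' => p q r s qp rq sr ps pv rv vq vs.
  exact: (no4 _ _ _ _ sr rq qp ps vs vq rv pv).
have R1A := R1 irr xr outm inm no4.
have R2A := R2 irr xr outm inm no4.
have R3A := R3 irr xr outm inm no4.
have R4A := R4 irr xr outm inm no4.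
have R1B : forall b, b \in [set w | adj w v] -> 0 < c adj v b <= m :=
  R1 irr' xr' inm outm no4'.
have R2B : forall b b', b \in [set w | adj w v] -> b' \in [set w | adj w v] ->
  c adj v b = c adj v b' -> b = b' := R2 irr' xr' inm outm no4'.
have R3B : forall b b', b \in [set w | adj w v] -> b' \in [set w | adj w v] ->
  c adj v b < c adj v b' -> adj b' b := R3 irr' xr' inm outm no4'.
pose pos w := if w == v then 0 else if adj v w then n adj v w else m.*2.+1 - c adj v w.
have cls : forall w, [\/ w = v /\ pos w = 0,
    [/\ adj v w, w \in [set w | adj v w], pos w = n adj v w & 0 < n adj v w <= m] |
    [/\ adj w v, ~~ adj v w, w \in [set w | adj w v], pos w = m.*2.+1 - c adj v w & 0 < c adj v w <= m]].
  move=> w; rewrite /pos; case: (eqVneq w v) => [->|ne]; first by constructor 1.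
  case E: (adj v w).
    by constructor 2; split => //; [rewrite inE | apply: R1A; rewrite inE].
  have wv : adj w v by move: (xr _ _ ne); rewrite E; case: (adj w v).
  constructor 3; split; [exact: wv | by rewrite ?E | by rewrite inE | by [] | ].
  by apply: R1B; rewrite inE.
have bnd : forall w, pos w < m.*2.+1.
  by move=> w; case: (cls w) => [[_ ->]|[_ _ -> H]|[_ _ _ -> H]]; lia.
have inj : injective pos.
  move=> x y; case: (cls x) => [[-> ->]|[vx xA -> H]|[xv nvx xB -> H]];
    case: (cls y) => [[-> ->]|[vy yA -> H']|[yv nvy yB -> H']] //; try lia.
  - by move/R2A; apply.
  - by move=> E; apply: R2B => //; lia.
have P : forall x y, pos x < pos y -> adj x y = (pos y - pos x <= m).
  move=> x y; case: (cls x) => [[-> ->]|[vx xA -> H]|[xv nvx xB -> H]];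
    case: (cls y) => [[-> ->]|[vy yA -> H']|[yv nvy yB -> H']] //; try lia.
  - by move=> lt; rewrite (R3A _ _ xA yA lt); lia.
  - by move=> _; rewrite (R4A _ _ xA yB); lia.
  - move=> lt; have lt' : c adj v y < c adj v x by lia.
    by rewrite (R3B _ _ yB xB lt'); lia.
pose g (w : V) : 'I_(m.*2.+1) := inord (pos w).
have gE : forall w, val (g w) = pos w by move=> w; rewrite /g /= inordK.
have ginj : injective g.
  by move=> x y /(congr1 val); rewrite !gE; apply: inj.
have gbij : bijective g by apply: inj_card_bij => //; rewrite card_ord cV.
case: gbij => f gf fg.
exists m, f; split; first by exists g.
move=> i j lt.
have pi : pos (f i) = i by rewrite -gE fg.
have pj : pos (f j) = j by rewrite -gE fg.
by rewrite P pi pj.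
Qed.
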